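(* Let $G$ be a cohomologically finite dimensional locally compact second countable group. Then $\dim_{\mathbb{R}}\mathrm{Pol}_d(G)<+\infty$ for all $d\in\mathbb{N}$.
   Context: $G$ is cohomologically finite dimensional if $\dim_{\mathbb{R}}H^n(G,\mathcal{E})<\infty$ (continuous cohomology) for every finite dimensional continuous $G$-module $\mathcal{E}$ and every $n\in\mathbb{N}$. For $\xi\colon G\to\mathbb{R}$ and $g\in G$ let $(\partial_g\xi)(h)=\xi(g^{-1}h)-\xi(h)$. $\mathrm{Pol}_d(G)$ is the space of continuous $\xi\colon G\to\mathbb{R}$ such that $\partial_{g_1}\cdots\partial_{g_{d+1}}\xi\equiv0$ for all $g_1,\dots,g_{d+1}\in G$ (continuous polynomial maps of degree at most $d$). *)

(* Defs.v *)
From HB Require Import structures.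
From mathcomp Require Import all_boot all_algebra.
From mathcomp Require Import all_classical all_reals all_analysis.
Import GRing.Theory Num.Theory numFieldNormedType.Exports.

Set Implicit Arguments.
Unset Strict Implicit.
Unset Printing Implicit Defensive.

Local Open Scope ring_scope.

Section Defs.
Variable G : topologicalType.
Variables (mul : G -> G -> G) (inv : G -> G) (e : G).

Definition is_topological_group : Prop :=
  [/\ (forall x y z, mul x (mul y z) = mul (mul x y) z),
      (forall x, mul e x = x /\ mul x e = x),
      (forall x, mul (inv x) x = e /\ mul x (inv x) = e),
      continuous (fun p : G * G => mul p.1 p.2) &
      continuous inv].

Variable R : realType.

(** A finite dimensional continuous G-module, realised (after a choice of
    basis) as R^m = 'cV[R]_m with G acting by rho : G -> 'M[R]_m, such that the
    action map G * E -> E, (g, v) |-> rho g *m v, is continuous. *)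
Definition is_cont_module (m : nat) (rho : G -> 'M[R]_m) : Prop :=
  [/\ rho e = 1%:M,
      (forall g h, rho (mul g h) = rho g *m rho h) &
      continuous (fun p : G * 'cV[R]_m => rho p.1 *m p.2)].

Section Cochains.
Variables (m : nat) (rho : G -> 'M[R]_m).

(** Inhomogeneous n-cochains are functions G^n -> E; G^n is represented by
    sequences of length n (values on other lengths are irrelevant).
    Continuity is for the product topology on G^n. *)
Definition cochain_cont (n : nat) (f : seq G -> 'cV[R]_m) : Prop :=
  forall s, size s = n -> forall V, nbhs (f s) V ->
    exists U : nat -> set G,
      (forall i, (i < n)%N -> nbhs (nth e s i) (U i)) /\
      (forall t, size t = n -> (forall i, (i < n)%N -> U i (nth e t i)) ->
         V (f t)).

(** Coboundary d : C^n -> C^(n+1):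
    (df)(g_1,...,g_{n+1}) = g_1 . f(g_2,...,g_{n+1})
      + sum_{i=1}^n (-1)^i f(g_1,...,g_i g_{i+1},...,g_{n+1})
      + (-1)^(n+1) f(g_1,...,g_n). *)
Definition cobound (n : nat) (f : seq G -> 'cV[R]_m) : seq G -> 'cV[R]_m :=
  fun s =>
    rho (head e s) *m f (behead s)
    + \sum_(i < n) ((-1) ^+ i.+1) *:
          f (take i s ++ mul (nth e s i) (nth e s i.+1) :: drop i.+2 s)
    + ((-1) ^+ n.+1) *: f (take n s).

Definition cocycle (n : nat) (z : seq G -> 'cV[R]_m) : Prop :=
  cochain_cont n z /\ (forall s, size s = n.+1 -> cobound n z s = 0).

(** dim_R H^n_cont(G, E) < oo : the space Z^n / B^n is spanned by finitely
    many classes. *)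
Definition cohom_finite_dim (n : nat) : Prop :=
  exists (k : nat) (c : 'I_k -> seq G -> 'cV[R]_m),
    (forall j, cocycle n (c j)) /\
    (forall z, cocycle n z ->
       exists (a : 'I_k -> R) (psi : seq G -> 'cV[R]_m),
         (match n with 0 => True | n'.+1 => cochain_cont n' psi end) /\
         (forall s, size s = n ->
            z s = \sum_(j < k) a j *: c j s
                  + (match n with 0 => 0 | n'.+1 => cobound n' psi s end))).

End Cochains.

Definition cohomologically_finite_dimensional : Prop :=
  forall (m : nat) (rho : G -> 'M[R]_m), is_cont_module rho ->
    forall n : nat, cohom_finite_dim rho n.

Definition pdiff (g : G) (xi : G -> R) : G -> R :=
  fun h => xi (mul (inv g) h) - xi h.

Definition Pol (d : nat) (xi : G -> R) : Prop :=
  continuous xi /\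
  (forall gs : seq G, size gs = d.+1 -> foldr pdiff xi gs = (fun _ => 0)).

Definition Pol_finite_dim (d : nat) : Prop :=
  exists (k : nat) (b : 'I_k -> G -> R),
    (forall j, Pol d (b j)) /\
    (forall xi, Pol d xi ->
       exists a : 'I_k -> R, xi = (fun h => \sum_(j < k) a j * b j h)).

End Defs.

(* Main.v *)
Require Import Defs.
From HB Require Import structures.
From mathcomp Require Import all_boot all_algebra.
From mathcomp Require Import all_classical all_reals all_analysis.
From mathcomp Require Import ring.
Import GRing.Theory Num.Theory numFieldNormedType.Exports.
Set Implicit Arguments.
Unset Strict Implicit.
Unset Printing Implicit Defensive.
Local Open Scope ring_scope.

Lemma sum_delta (R : comRingType) (N : nat) (F : nat -> R) (l : nat) :
  (l < N)%N -> \sum_(i < N) F i * ((i : nat) == l)%:R = F l.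
Proof.
move=> hl; rewrite (bigD1 (Ordinal hl)) //= eqxx mulr1 big1 ?addr0 //.
move=> i /negPf hi; suff -> : (i == l :> nat) = false by rewrite mulr0.
by apply/negbTE; apply: contraFN hi => /eqP h; apply/eqP/val_inj.
Qed.

Lemma ord_neqN (N : nat) (i : 'I_N) : (i == N :> nat) = false.
Proof. by rewrite ltn_eqF. Qed.

Lemma greedy (X : Type) (x0 : X) (R : fieldType) (S : (X -> R) -> Prop)
  (SB : forall f g c, S f -> S g -> S (fun x => f x - c * g x))
  (SZ : forall f c, S f -> S (fun x => c * f x))
  (bs : nat -> X -> R) (K : nat) : (forall j, (j < K)%N -> S (bs j)) ->
  exists N (u : nat -> X -> R) (p : nat -> X),
   [/\ (forall i, (i < N)%N -> S (u i)),
      (forall i l, (i < N)%N -> (l < N)%N -> u i (p l) = (i == l)%:R) &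
      (forall j, (j < K)%N -> forall x, bs j x = \sum_(i < N) bs j (p i) * u i x)].
Proof.
elim: K => [|K IH] hS.
  by exists 0%N, (fun _ _ => 0), (fun _ => x0) ; split.
have [N [u [p [uS ud bsp]]]] : exists N (u : nat -> X -> R) (p : nat -> X),
   [/\ (forall i, (i < N)%N -> S (u i)),
      (forall i l, (i < N)%N -> (l < N)%N -> u i (p l) = (i == l)%:R) &
      (forall j, (j < K)%N -> forall x, bs j x = \sum_(i < N) bs j (p i) * u i x)].
  by apply: IH => j hj; apply: hS; exact: ltnW.
pose b := bs K.
have hSb : S b by apply: hS.
pose b' x := b x - \sum_(i < N) b (p i) * u i x.
have Sb'n : forall n, (n <= N)%N -> S (fun x => b x - \sum_(i < n) b (p i) * u i x).
  elim=> [|n IHn] hn.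
    have := SB b b 0 hSb hSb.
    by congr S; apply: funext => x; rewrite big_ord0 mul0r.
  have := SB _ _ (b (p n)) (IHn (ltnW hn)) (uS n hn).
  by congr S; apply: funext => x; rewrite big_ord_recr /= opprD addrA.
have Sb' : S b' by exact: Sb'n.
have b'p : forall l, (l < N)%N -> b' (p l) = 0.
  move=> l hl; rewrite /b'.
  rewrite (eq_bigr (fun i : 'I_N => b (p i) * ((i : nat) == l)%:R)); last first.
    by move=> i _; rewrite ud.
  by rewrite (@sum_delta _ N (fun i => b (p i))) // subrr.
case: (pselect (exists q, b' q != 0)) => [[q hq]|hno]; last first.
  exists N, u, p; split => // j; rewrite ltnS leq_eqVlt => /orP [/eqP ->|hc] x; last exact: bsp.
  apply/eqP; rewrite -subr_eq0; apply/eqP.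
  by case: (eqVneq (b' x) 0) => // h; exfalso; apply: hno; exists x.
pose un x := (b' q)^-1 * b' x.
have unq : un q = 1 by rewrite /un mulVf.
have unp : forall l, (l < N)%N -> un (p l) = 0 by move=> l hl; rewrite /un b'p // mulr0.
pose u' i := if i == N then un else (fun x => u i x - u i q * un x).
pose p' i := if i == N then q else p i.
exists N.+1, u', p'; split.
- move=> i hi; rewrite /u'; case: (eqVneq i N) => [_|hiN]; first exact: SZ.
  apply: SB; [apply: uS; by rewrite ltn_neqAle hiN -ltnS | exact: SZ].
- move=> i l hi hl; rewrite /u' /p'.
  case: (eqVneq i N) => [hiN|hiN]; case: (eqVneq l N) => [hlN|hlN].
  + by rewrite unq hiN hlN eqxx.
  + rewrite unp; last by rewrite ltn_neqAle hlN -ltnS.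
    by rewrite hiN eq_sym (negPf hlN).
  + by rewrite unq mulr1 subrr hlN (negPf hiN).
  + have hi' : (i < N)%N by rewrite ltn_neqAle hiN -ltnS.
    have hl' : (l < N)%N by rewrite ltn_neqAle hlN -ltnS.
    by rewrite unp // mulr0 subr0 ud.
- move=> j hj x; rewrite big_ord_recr /= /u' /p' eqxx.
  under eq_bigr do rewrite ord_neqN.
  under eq_bigr do rewrite mulrBr.
  rewrite sumrB.
  have -> : \sum_(i < N) bs j (p i) * (u i q * un x) =
            (\sum_(i < N) bs j (p i) * u i q) * un x.
    by rewrite mulr_suml; apply: eq_bigr => i _; rewrite mulrA.
  move: hj; rewrite ltnS leq_eqVlt => /orP [/eqP hj|hc].
    subst j.
    have -> : \sum_(i < N) bs K (p i) * u i q = b q - b' q by rewrite /b' opprB addrC subrK.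
    by rewrite mulrBl /un mulrA mulrA mulfV // mul1r /b' /b; ring.
  by rewrite -(bsp j hc q) -(bsp j hc x) subrK.
Qed.

Section GroupPol.
Variables (R : realType) (G : topologicalType).
Variables (mul : G -> G -> G) (inv : G -> G) (e : G).
Hypothesis HG : is_topological_group mul inv e.

Let mulA : forall x y z, mul x (mul y z) = mul (mul x y) z.
Proof. by case: HG. Qed.
Let mul1g x : mul e x = x. Proof. by case: HG => _ h _ _ _; case: (h x). Qed.
Let mulg1 x : mul x e = x. Proof. by case: HG => _ h _ _ _; case: (h x). Qed.
Let mulVg x : mul (inv x) x = e. Proof. by case: HG => _ _ h _ _; case: (h x). Qed.
Let mulgV x : mul x (inv x) = e. Proof. by case: HG => _ _ h _ _; case: (h x). Qed.

Lemma g_inv_uniq x y : mul x y = e -> inv x = y.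
Proof. by move=> h; rewrite -[inv x]mulg1 -h mulA mulVg mul1g. Qed.

Lemma g_invM a b : inv (mul a b) = mul (inv b) (inv a).
Proof.
apply: g_inv_uniq; rewrite mulA -(mulA a b) mulgV mulg1 mulgV //.
Qed.

Lemma g_inv1 : inv e = e.
Proof. by apply: g_inv_uniq; rewrite mul1g. Qed.

Lemma g_mulKg a x : mul (inv a) (mul a x) = x.
Proof. by rewrite mulA mulVg mul1g. Qed.

Lemma g_conj_act h g x :
  mul (inv (mul (inv h) (mul g h))) (mul (inv h) x) = mul (inv h) (mul (inv g) x).
Proof.
have -> : inv (mul (inv h) (mul g h)) = mul (inv h) (mul (inv g) h).
  apply: g_inv_uniq.
  rewrite -!mulA (mulA h (inv h)) mulgV mul1g (mulA g (inv g)) mulgV mul1g mulVg //.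
by rewrite -!mulA (mulA h (inv h)) mulgV mul1g.
Qed.

Lemma g_mul_cont : continuous (fun p : G * G => mul p.1 p.2).
Proof. by case: HG. Qed.

Lemma g_inv_cont : continuous inv.
Proof. by case: HG. Qed.

Lemma g_lmul_cont a : continuous (fun x => mul a x).
Proof.
move=> x.
apply: (@continuous_comp _ _ _ (fun y : G => (a, y)) (fun p : G * G => mul p.1 p.2)).
  by apply: cvg_pair; [exact: cvg_cst | exact: cvg_id].
exact: g_mul_cont.
Qed.

Lemma g_rmul_cont b : continuous (fun x => mul x b).
Proof.
move=> x.
apply: (@continuous_comp _ _ _ (fun y : G => (y, b)) (fun p : G * G => mul p.1 p.2)).
  by apply: cvg_pair; [exact: cvg_id | exact: cvg_cst].
exact: g_mul_cont.
Qed.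

Lemma g_invmul_cont b : continuous (fun x => mul (inv x) b).
Proof.
move=> x.
apply: (@continuous_comp _ _ _ inv (fun y => mul y b)).
  exact: g_inv_cont.
exact: g_rmul_cont.
Qed.

Lemma cont_lin (T : topologicalType) (f g : T -> R) a b :
  continuous f -> continuous g -> continuous (fun x => a * f x + b * g x).
Proof.
move=> cf cg x.
apply: (@cvgD _ _ _ _ _ (fun x => a * f x) (fun x => b * g x)).
  by apply: (@cvgM _ _ _ _ (fun=> a) f); [exact: cvg_cst | exact: cf].
by apply: (@cvgM _ _ _ _ (fun=> b) g); [exact: cvg_cst | exact: cg].
Qed.

Notation pd := (@pdiff G mul inv R).
Notation PolR := (@Pol G mul inv R).

Lemma foldr_lin (f g : G -> R) a b gs :
  foldr pd (fun x => a * f x + b * g x) gs =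
  (fun x => a * foldr pd f gs x + b * foldr pd g gs x).
Proof.
elim: gs => [//|h gs IH] /=; rewrite IH; apply: funext => x; rewrite /pdiff; ring.
Qed.

Lemma Pol_lin d (f g : G -> R) a b :
  PolR d f -> PolR d g -> PolR d (fun x => a * f x + b * g x).
Proof.
move=> [cf hf] [cg hg]; split; first exact: cont_lin.
move=> gs hs; rewrite foldr_lin hf // hg //; apply: funext => x; ring.
Qed.

Lemma foldr_const (c : R) gs : exists c', foldr pd (fun _ => c) gs = (fun _ => c').
Proof.
elim: gs => [|h gs [c' IH]] /=; first by exists c.
by exists 0; rewrite IH /pdiff; apply: funext => x; rewrite subrr.
Qed.

Lemma Pol_const d (c : R) : PolR d (fun _ => c).
Proof.
split; first by move=> x; exact: cvg_cst.
case=> [//|h gs] _ /=; have [c' ->] := foldr_const c gs.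
by rewrite /pdiff; apply: funext => x; rewrite subrr.
Qed.

Lemma Pol_mono d f : PolR d f -> PolR d.+1 f.
Proof.
move=> [cf hf]; split => //; case=> [//|h gs] /= [hs].
by rewrite hf // /pdiff; apply: funext => x; rewrite subrr.
Qed.

Lemma Pol_pdiff d f g : PolR d.+1 f -> PolR d (pd g f).
Proof.
move=> [cf hf]; split.
  rewrite /pdiff => x; apply: (@cvgB _ _ _ _ _ (fun h => f (mul (inv g) h)) f); last exact: cf.
  apply: (@continuous_comp _ _ _ (fun h => mul (inv g) h) f); first exact: g_lmul_cont.
  exact: cf.
move=> gs hs; rewrite -foldr_rcons; apply: hf; by rewrite size_rcons hs.
Qed.

Lemma foldr_lam f h gs :
  foldr pd (fun x => f (mul (inv h) x)) gs =
  (fun x => foldr pd f (map (fun g => mul (inv h) (mul g h)) gs) (mul (inv h) x)).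
Proof.
elim: gs => [//|g gs IH] /=; rewrite IH; apply: funext => x; rewrite /pdiff.
by rewrite g_conj_act.
Qed.

Lemma Pol_lam d f h : PolR d f -> PolR d (fun x => f (mul (inv h) x)).
Proof.
move=> [cf hf]; split.
  move=> x; apply: (@continuous_comp _ _ _ (fun x => mul (inv h) x) f); first exact: g_lmul_cont.
  exact: cf.
by move=> gs hs; rewrite foldr_lam hf // size_map.
Qed.

Lemma Pol_sum d n (c : nat -> R) (F : nat -> G -> R) :
  (forall i, (i < n)%N -> PolR d (F i)) ->
  PolR d (fun x => \sum_(i < n) c i * F i x).
Proof.
elim: n => [|n IH] hF.
  by have := Pol_const d 0; congr PolR; apply: funext => x; rewrite big_ord0.
have := Pol_lin 1 (c n) (IH (fun i hi => hF i (ltnW hi))) (hF n (ltnSn n)).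
by congr PolR; apply: funext => x; rewrite big_ord_recr /= mul1r.
Qed.

End GroupPol.

Section MxCont.
Variable R : realType.

Lemma mx_cont (T : topologicalType) m n (f : T -> 'M[R]_(m, n)) :
  (forall i j, continuous (fun x => f x i j)) -> continuous f.
Proof.
move=> hf x A /nbhs_ballP[eps /= e0 eA].
have : \forall y \near x, forall i, forall j, ball (f x i j) eps (f y i j).
  apply: filter_forall => i; apply: filter_forall => j.
  exact: (hf i j x) (nbhsx_ballx _ _ e0).
apply: filterS => y hy; apply: eA; split => //.
Qed.

Lemma mx_entry_cont m n (i : 'I_m) (j : 'I_n) :
  continuous (fun v : 'M[R]_(m, n) => v i j).
Proof.
move=> v A /nbhs_ballP[eps /= e0 eA].
apply/nbhs_ballP; exists eps => // w [_ vw]; apply: eA; exact: vw i j.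
Qed.

Lemma fin_span k (A : set 'rV[R]_k) :
  exists s : seq 'rV[R]_k, (forall v, v \in s -> A v) /\
    (forall a, A a -> a \in (span s)).
Proof.
pose P n := `[< exists s : seq 'rV[R]_k, (forall v, v \in s -> A v) /\ \dim (span s) = n >].
have exP : exists n, P n.
  by exists 0%N; apply/asboolP; exists [::]; split => //; rewrite span_nil dimv0.
have ubP : forall n, P n -> (n <= \dim (fullv : {vspace 'rV[R]_k}))%N.
  by move=> n /asboolP [s [_ <-]]; apply: dimvS; exact: subvf.
case: (ex_maxnP exP ubP) => n /asboolP [s [sA sd]] nmax.
exists s; split => // a Aa.
have Pa : P (\dim (span (a :: s))).
  apply/asboolP; exists (a :: s); split => // v; rewrite in_cons => /orP [/eqP ->|] //.
  exact: sA.
have le := nmax _ Pa.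
have sub : (span s <= span (a :: s))%VS by rewrite span_cons addvSr.
have /eqP eqs : ((span s) == (span (a :: s))) by rewrite eqEdim sub sd.
by rewrite eqs memv_span // mem_head.
Qed.

End MxCont.

Section Step.
Variables (R : realType) (G : topologicalType).
Variables (mul : G -> G -> G) (inv : G -> G) (e : G).
Hypothesis HG : is_topological_group mul inv e.
Variable d : nat.
Notation pd := (@pdiff G mul inv R).
Notation PolR := (@Pol G mul inv R).

Variables (N : nat) (u : nat -> G -> R) (p : nat -> G).
Hypothesis uS : forall i, (i < N)%N -> PolR d (u i).
Hypothesis ud : forall i l, (i < N)%N -> (l < N)%N -> u i (p l) = (i == l)%:R.
Hypothesis interp : forall f, PolR d f -> forall x, f x = \sum_(i < N) f (p i) * u i x.

Let mulA : forall x y z, mul x (mul y z) = mul (mul x y) z.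
Proof. by case: HG. Qed.
Let mul1g x : mul e x = x. Proof. by case: HG => _ h _ _ _; case: (h x). Qed.
Let mulVg x : mul (inv x) x = e. Proof. by case: HG => _ _ h _ _; case: (h x). Qed.

Definition rho (g : G) : 'M[R]_N := \matrix_(l < N, i < N) u i (mul (inv g) (p l)).

Lemma rho_mod : is_cont_module mul e rho.
Proof.
split.
- apply/matrixP => l i; rewrite !mxE (g_inv1 HG) mul1g ud // eq_sym //.
- move=> g h; apply/matrixP => l i; rewrite !mxE.
  under eq_bigr do rewrite !mxE.
  rewrite (g_invM HG) -mulA.
  rewrite (interp (Pol_lam HG h (uS (ltn_ord i)))).
  by apply: eq_bigr => j _; rewrite mulrC.
- apply: mx_cont => l j.
  have -> : (fun x : G * 'cV[R]_N => (rho x.1 *m x.2) l j) =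
            (fun x => \sum_(i < N) u i (mul (inv x.1) (p l)) * x.2 i j).
    by apply: funext => x; rewrite !mxE; apply: eq_bigr => i _; rewrite !mxE.
  apply: continuous_big; first exact: add_continuous.
  move=> i _ x.
  apply: (continuousM (s := fun x : G * 'cV[R]_N => u i (mul (inv x.1) (p l)))
            (t := fun x => x.2 i j)).
    apply: (@continuous_comp _ _ _ fst (fun g => u i (mul (inv g) (p l)))).
      exact: cvg_fst.
    apply: (@continuous_comp _ _ _ (fun g => mul (inv g) (p l)) (u i)).
      exact: (g_invmul_cont HG).
    by case: (uS (ltn_ord i)) => + _; apply.
  apply: (@continuous_comp _ _ _ snd (fun v : 'cV[R]_N => v i j)).
    exact: cvg_snd.
  exact: mx_entry_cont.
Qed.


Definition Zc (xi : G -> R) (g : G) : 'cV[R]_N :=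
  \col_l (xi (mul (inv g) (p l)) - xi (p l)).
Definition zc xi (s : seq G) := Zc xi (head e s).

Lemma Zc_cont xi : continuous xi -> continuous (Zc xi).
Proof.
move=> cxi; apply: mx_cont => l j.
have -> : (fun g => Zc xi g l j) = (fun g => xi (mul (inv g) (p l)) - xi (p l)).
  by apply: funext => g; rewrite !mxE.
move=> g; apply: (cvgB (f := fun g => xi (mul (inv g) (p l))) (g := fun=> xi (p l))).
  apply: (@continuous_comp _ _ _ (fun g => mul (inv g) (p l)) xi).
    exact: (g_invmul_cont HG).
  exact: cxi.
exact: cvg_cst.
Qed.

Lemma zc_cocycle xi : PolR d.+1 xi -> cocycle mul e rho 1%N (zc xi).
Proof.
move=> hxi; have cxi : continuous xi by case: hxi.
split.
  case=> [|g [|? ?]] //= _ V hV.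
  have hU := Zc_cont cxi hV.
  exists (fun _ => (Zc xi @^-1` V)%classic); split.
    by move=> i; rewrite ltnS leqn0 => /eqP -> /=.
  by case=> [|g' [|? ?]] //= _ /(_ 0%N isT).
case=> [|g [|h [|? ?]]] //= _.
rewrite /cobound /= big_ord1 /=.
apply/matrixP => l j; rewrite !mxE /=.
under eq_bigr do rewrite !mxE.
have key := interp (Pol_pdiff HG h hxi) (mul (inv g) (p l)).
rewrite /pdiff in key.
have -> : \sum_(i < N) u i (mul (inv g) (p l)) * (xi (mul (inv h) (p i)) - xi (p i)) =
          xi (mul (inv h) (mul (inv g) (p l))) - xi (mul (inv g) (p l)).
  by rewrite key; apply: eq_bigr => i _; rewrite mulrC.
rewrite (g_invM HG) -mulA expr1 sqrrN expr1n; ring.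
Qed.


Definition Ep k (c : 'I_k -> seq G -> 'cV[R]_N) (xi : G -> R) (a : 'I_k -> R)
  (psi : nat -> R) :=
  forall g (l : 'I_N), xi (mul (inv g) (p l)) - xi (p l) =
    \sum_(j < k) a j * c j [:: g] l ord0 +
    (\sum_(i < N) u i (mul (inv g) (p l)) * psi i - psi l).

Lemma Ep_lin k c xi1 xi2 a1 a2 psi1 psi2 t :
  @Ep k c xi1 a1 psi1 -> @Ep k c xi2 a2 psi2 ->
  Ep c (fun x => xi1 x - t * xi2 x) (fun j => a1 j - t * a2 j)
       (fun i => psi1 i - t * psi2 i).
Proof.
move=> h1 h2 g l.
have -> : forall A B C D : R, A - t * B - (C - t * D) = (A - C) - t * (B - D).
  by move=> *; ring.
rewrite h1 h2.
have E1 : \sum_(j < k) (a1 j - t * a2 j) * c j [:: g] l ord0 =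
    \sum_(j < k) a1 j * c j [:: g] l ord0 - t * \sum_(j < k) a2 j * c j [:: g] l ord0.
  by rewrite mulr_sumr -sumrB; apply: eq_bigr => j _; ring.
have E2 : \sum_(i < N) u i (mul (inv g) (p l)) * (psi1 i - t * psi2 i) =
    \sum_(i < N) u i (mul (inv g) (p l)) * psi1 i -
      t * \sum_(i < N) u i (mul (inv g) (p l)) * psi2 i.
  by rewrite mulr_sumr -sumrB; apply: eq_bigr => j _; ring.
rewrite E1 E2; ring.
Qed.

Lemma Ep_ext k c xi xi' a a' psi psi' :
  @Ep k c xi a psi -> (forall x, xi x = xi' x) -> (forall j, a j = a' j) ->
  (forall i, psi i = psi' i) -> Ep c xi' a' psi'.
Proof.
move=> h h1 h2 h3.
have <- : xi = xi' by apply: funext.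
have <- : a = a' by apply: funext.
have <- : psi = psi' by apply: funext.
exact: h.
Qed.


Lemma step_fin (Hcfd : cohomologically_finite_dimensional mul e R) :
  Pol_finite_dim mul inv R d.+1.
Proof.
have [k [c [cc hc]]] := Hcfd _ _ rho_mod 1%N.
have Ez : forall xi, PolR d.+1 xi -> exists a psi, Ep c xi a psi.
  move=> xi hxi; have [a [psi [_ hz]]] := hc _ (zc_cocycle hxi).
  exists a, (fun i => oapp (fun o => psi [::] o ord0) 0 (insub i)) => g l.
  have := congr1 (fun M : 'cV[R]_N => M l ord0) (hz [:: g] erefl).
  rewrite /zc /cobound /= !mxE big_ord0 /= => ->.
  rewrite summxE; congr (_ + _); first by apply: eq_bigr => j _; rewrite !mxE.
  rewrite valK /= mxE addr0 expr1 mulN1r; congr (_ - _).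
  by apply: eq_bigr => i _; rewrite mxE valK.
pose A : set 'rV[R]_k := fun v => exists xi, PolR d.+1 xi /\
  exists psi, Ep c xi (fun j => v ord0 j) psi.
have [s [sA sspan]] := fin_span A.
have [F hF] : {F : 'rV[R]_k -> (G -> R) * (nat -> R) & forall v, v \in s ->
    PolR d.+1 (F v).1 /\ Ep c (F v).1 (fun j => v ord0 j) (F v).2}.
  apply: (@choice _ _ (fun v (Fv : (G -> R) * (nat -> R)) => v \in s ->
    PolR d.+1 Fv.1 /\ Ep c Fv.1 (fun j => v ord0 j) Fv.2)) => v; case: (boolP (v \in s)) => hv; last first.
    by exists ((fun _ => 0), (fun _ => 0)).
  by have [xi [hxi [psi hE]]] := sA v hv; exists (xi, psi).
pose T := size s.
pose Fx (t : nat) := (F (nth 0 s t)).1.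
pose Fp (t : nat) := (F (nth 0 s t)).2.
pose V (t : nat) (j : 'I_k) := nth 0 s t ord0 j.
have hFt : forall t, (t < T)%N -> PolR d.+1 (Fx t) /\ Ep c (Fx t) (V t) (Fp t).
  by move=> t ht; apply: hF; exact: mem_nth.
pose Bn (j : nat) := if (j < T)%N then Fx j else if (j - T < N)%N then u (j - T)%N
  else (fun _ => 1).
exists (T + N).+1, (fun j : 'I_(T + N).+1 => Bn j); split.
  move=> j; rewrite /Bn; case: ifP => h1; first by case: (hFt _ h1).
  case: ifP => h2; first exact: Pol_mono (uS h2).
  exact: Pol_const.
move=> xi hxi.
have [a [psi hE]] := Ez xi hxi.
pose ar : 'rV[R]_k := \row_j a j.
have Aar : A ar.
  exists xi; split => //; exists psi; apply: (Ep_ext hE) => // j; by rewrite mxE.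
have hsp := @coord_span _ _ _ (in_tuple s) _ (sspan _ Aar).
pose bn (t : nat) := oapp (fun o => coord (in_tuple s) o ar) 0 (insub t).
have ha : forall j, a j = \sum_(t < T) bn t * V t j.
  move=> j; have := congr1 (fun M : 'rV[R]_k => M ord0 j) hsp; rewrite /= mxE => ->.
  by rewrite summxE; apply: eq_bigr => t _; rewrite mxE /bn valK.
have hind : forall n, (n <= T)%N ->
    Ep c (fun x => xi x - \sum_(t < n) bn t * Fx t x)
         (fun j => a j - \sum_(t < n) bn t * V t j)
         (fun i => psi i - \sum_(t < n) bn t * Fp t i).
  elim=> [|n IH] hn.
    by apply: (Ep_ext hE) => *; rewrite big_ord0 subr0.
  have := Ep_lin (bn n) (IH (ltnW hn)) (proj2 (hFt n hn)).
  by move/Ep_ext; apply => *; rewrite big_ord_recr /= opprD addrA.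
have hT := hind T (leqnn T).
pose psi' i := psi i - \sum_(t < T) bn t * Fp t i.
pose xi' x := xi x - \sum_(t < T) bn t * Fx t x.
pose eta x := \sum_(i < N) psi' i * u i x.
pose D x := xi' x - eta x.
have Pxi' : PolR d.+1 xi'.
  have := Pol_lin 1 (-1) hxi (Pol_sum bn (fun t ht => proj1 (hFt t ht))).
  by congr PolR; apply: funext => x; rewrite /xi'; ring.
have Peta : PolR d.+1 eta.
  by apply: Pol_mono; apply: Pol_sum => i hi; exact: uS.
have PD : PolR d.+1 D.
  have := Pol_lin 1 (-1) Pxi' Peta.
  by congr PolR; apply: funext => x; rewrite /D; ring.
have Deta : forall l : 'I_N, eta (p l) = psi' l.
  move=> l; rewrite /eta.
  rewrite (eq_bigr (fun i : 'I_N => psi' i * ((i : nat) == l)%:R)); last first.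
    by move=> i _; rewrite ud.
  by rewrite (@sum_delta _ N psi').
have hDp : forall g (l : 'I_N), D (mul (inv g) (p l)) - D (p l) = 0.
  move=> g l.
  have -> : D (mul (inv g) (p l)) - D (p l) =
    (xi' (mul (inv g) (p l)) - xi' (p l)) - (eta (mul (inv g) (p l)) - eta (p l)).
    by rewrite /D; ring.
  rewrite hT big1; last by move=> j _; rewrite -ha subrr mul0r.
  rewrite Deta /eta add0r.
  have -> : \sum_(i < N) u i (mul (inv g) (p l)) * psi' i =
            \sum_(i < N) psi' i * u i (mul (inv g) (p l)).
    by apply: eq_bigr => i _; rewrite mulrC.
  by rewrite /psi' subrr.
have hD : forall g x, D (mul (inv g) x) = D x.
  move=> g x; apply/eqP; rewrite -subr_eq0; apply/eqP.
  have := interp (Pol_pdiff HG g PD) x; rewrite /pdiff => ->.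
  by apply: big1 => l _; rewrite hDp mul0r.
have hDx : forall x, D x = D e by move=> x; rewrite -(hD x x) mulVg.
pose An (j : nat) := if (j < T)%N then bn j else if (j - T < N)%N then psi' (j - T)%N
  else D e.
exists (fun j : 'I_(T + N).+1 => An j); apply: funext => x.
rewrite big_ord_recr /= big_split_ord /=.
have e1 : \sum_(i < T) An (widen_ord (leqnSn (T + N)) (lshift N i)) *
           Bn (widen_ord (leqnSn (T + N)) (lshift N i)) x = \sum_(i < T) bn i * Fx i x.
  by apply: eq_bigr => i _; rewrite /An /Bn /= ltn_ord.
have e2 : \sum_(i < N) An (widen_ord (leqnSn (T + N)) (rshift T i)) *
           Bn (widen_ord (leqnSn (T + N)) (rshift T i)) x = eta x.
  by apply: eq_bigr => i _; rewrite /An /Bn /= ltnNge leq_addr /= addKn ltn_ord.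
rewrite e1 e2 /An /Bn /= ltnNge leq_addr /= addKn ltnn mulr1.
rewrite -(hDx x) /D /xi'; ring.
Qed.

End Step.

Section Final.
Variables (R : realType) (G : topologicalType).
Variables (mul : G -> G -> G) (inv : G -> G) (e : G).
Hypothesis HG : is_topological_group mul inv e.
Notation PolR := (@Pol G mul inv R).

Lemma Pol0_fin : Pol_finite_dim mul inv R 0.
Proof.
exists 1%N, (fun _ _ => 1); split; first by move=> j; exact: Pol_const.
move=> xi [_ hxi]; exists (fun _ => xi e); apply: funext => h.
rewrite big_ord1 mulr1.
have := congr1 (fun f => f h) (hxi [:: h] erefl); rewrite /= /pdiff.
have -> : mul (inv h) h = e by case: HG => _ _ H _ _; case: (H h).
by move/eqP; rewrite subr_eq0 => /eqP.
Qed.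

Lemma step_full (Hcfd : cohomologically_finite_dimensional mul e R) d :
  Pol_finite_dim mul inv R d -> Pol_finite_dim mul inv R d.+1.
Proof.
move=> [k [b [bP bsp]]].
have SB : forall f g c, PolR d f -> PolR d g -> PolR d (fun x => f x - c * g x).
  move=> f g c hf hg; have := Pol_lin 1 (- c) hf hg.
  by congr PolR; apply: funext => x; ring.
have SZ : forall f c, PolR d f -> PolR d (fun x => c * f x).
  move=> f c hf; have := Pol_lin c 0 hf hf.
  by congr PolR; apply: funext => x; ring.
pose bs (j : nat) := oapp b (fun _ => 0) (insub j).
have hbs : forall j, (j < k)%N -> PolR d (bs j).
  move=> j hj; rewrite /bs insubT /=; exact: bP.
have [N [u [p [uS ud up]]]] := greedy e SB SZ hbs.
have interp : forall f, PolR d f -> forall x, f x = \sum_(i < N) f (p i) * u i x.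
  move=> f hf x; have [a hfa] := bsp f hf; rewrite hfa /=.
  have hb : forall (j : 'I_k) y, b j y = \sum_(i < N) b j (p i) * u i y.
    by move=> j y; have := up j (ltn_ord j) y; rewrite /bs valK.
  under eq_bigr do rewrite hb mulr_sumr.
  rewrite exchange_big /=; apply: eq_bigr => i _.
  by rewrite mulr_suml; apply: eq_bigr => j _; rewrite mulrA.
exact: (step_fin HG uS ud interp Hcfd).
Qed.

End Final.

Theorem corollary6p7 (R : realType) (G : topologicalType)
    (mul : G -> G -> G) (inv : G -> G) (e : G)
    (HG : is_topological_group mul inv e)
    (Hhaus : hausdorff_space G)
    (Hlc : locally_compact [set: G])
    (Hsc : @second_countable G)
    (Hcfd : @cohomologically_finite_dimensional G mul e R) :
  forall d : nat, @Pol_finite_dim G mul inv R d.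
Proof.
elim=> [|d IH]; first exact: (Pol0_fin R HG).
exact: (step_full HG Hcfd IH).
Qed.
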